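(* Let $n\ge3$, $l\ge1$, $\mathfrak g=B^{(1)}_n$, $B$ the level-$l$ perfect crystal of the context, $\lambda=l\Lambda_0$, $d=2n-1$, and $i^{(j)}_1=i^{(j)}_{2n-1}=\epsilon(j+1)$, $i^{(j)}_a=i^{(j)}_{2n-a}=a$ for $2\le a\le n$. Then: (II) $B^{(j)}_d=B$ for all $j\ge1$; (III) $\langle\lambda_j,h_{i^{(j)}_a}\rangle\le\varepsilon_{i^{(j)}_a}(b)$ for all $j\ge1$, $1\le a\le d$, $b\in B^{(j)}_{a-1}$; (IV') for all $j\ge1$, $a=1,\dots,d$: $\varepsilon_{i^{(j)}_{a+1}}(b^{(j)}_a)=0$, $\varphi_{i^{(j)}_{a+1}}(b^{(j)}_a)>0$ (with $i^{(j)}_{d+1}:=i^{(j+1)}_1$), and $b^{(j+1)}_0=\tilde f_{i^{(j+1)}_1}^mb^{(j)}_d$ with $m=\langle\lambda_{j+1},h_{i^{(j+1)}_1}\rangle$. Moreover $B^{(j)}_0=\{(0,\dots,0,l)\}$ ($j$ odd), $\{(l,0,\dots,0)\}$ ($j$ even), $B^{(j)}_{2n-1}=B$, and for $1\le a\le n-1$: $B^{(j)}_a$ is the set of $b\in B$ whose coordinates are all $0$ except possibly $x_2,\dots,x_{a+1},\bar x_1$ ($j$ odd), resp. except possibly $x_1,\dots,x_{a+1}$ ($j$ even); $B^{(j)}_{n+a-1}$ is the set of $b\in B$ whose coordinates are all $0$ except possibly $x_2,\dots,x_n,x_0,\bar x_n,\dots,\bar x_{n-a+1},\bar x_1$ ($j$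 odd), resp. except possibly $x_1,\dots,x_n,x_0,\bar x_n,\dots,\bar x_{n-a+1}$ ($j$ even). Also $b^{(j)}_0=(0,\dots,0,l)$ ($j$ odd), $(l,0,\dots,0)$ ($j$ even); $b^{(j)}_{2n-1}=(l,0,\dots,0)$ ($j$ odd), $(0,\dots,0,l)$ ($j$ even); and for $1\le a\le n-1$, $b^{(j)}_a$ has $x_{a+1}=l$ and all other coordinates $0$, and $b^{(j)}_{n+a-1}$ has $\bar x_{n-a+1}=l$ and all other coordinates $0$.
   Context: $\epsilon(i)=0$ for $i$ even and $1$ for $i$ odd; $(x)_+=\max(x,0)$. $B=\{(x_1,\dots,x_n,x_0,\bar x_n,\dots,\bar x_1)\in\mathbb Z^{2n}\times\{0,1\}: x_i,\bar x_i\ge0,\ \sum_{i=1}^n(x_i+\bar x_i)=l\}$ (coordinates written in this order). Crystal structure: $\tilde f_0b=(x_1,x_2+1,\dots,\bar x_2,\bar x_1-1)$ if $x_2\ge\bar x_2$, $(x_1+1,x_2,\dots,\bar x_2-1,\bar x_1)$ if $x_2<\bar x_2$; for $1\le i\le n-1$, $\tilde f_ib$ replaces $(x_i,x_{i+1})$ by $(x_i-1,x_{i+1}+1)$ if $x_{i+1}\ge\bar x_{i+1}$, and $(\bar x_{i+1},\bar x_i)$ by $(\bar x_{i+1}-1,\bar x_i+1)$ if $x_{i+1}<\bar x_{i+1}$; $\tilde f_nb$ replaces $(x_n,x_0)$ by $(x_n-1,x_0+1)$ if $x_0=0$ and $(x_0,\bar x_n)$ by $(x_0-1,\bar x_n+1)$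 if $x_0=1$; $\tilde e_ib=b'$ iff $\tilde f_ib'=b$, and $\tilde f_ib=0$ if the result is not in $B$. $\varphi_0(b)=\bar x_1+(\bar x_2-x_2)_+$, $\varepsilon_0(b)=x_1+(x_2-\bar x_2)_+$; $\varphi_i(b)=x_i+(\bar x_{i+1}-x_{i+1})_+$, $\varepsilon_i(b)=\bar x_i+(x_{i+1}-\bar x_{i+1})_+$ ($1\le i\le n-1$); $\varphi_n(b)=2x_n+x_0$, $\varepsilon_n(b)=2\bar x_n+x_0$. For $\lambda=l\Lambda_0$: $\lambda_j=l\Lambda_{\epsilon(j)}$ and the ground state elements are $\overline b_j=(0,\dots,0,l)$ for $j$ odd, $(l,0,\dots,0)$ for $j$ even; $\langle\lambda_j,h_i\rangle$ is the coefficient of $\Lambda_i$ in $\lambda_j$. Given $d$, $i^{(j)}_a$: $B^{(j)}_0=\{\overline b_j\}$, $B^{(j)}_a=\bigcup_{n\ge0}\tilde f_{i^{(j)}_a}^nB^{(j)}_{a-1}\setminus\{0\}$; $b^{(j)}_0=\overline b_j$, $b^{(j)}_a=\tilde f_{i^{(j)}_a}^{\varphi_{i^{(j)}_a}(b^{(j)}_{a-1})}b^{(j)}_{a-1}$. *)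

(* Defs.v *)
From mathcomp Require Import all_boot.
Set Implicit Arguments. Unset Strict Implicit. Unset Printing Implicit Defensive.

(* An element b of the crystal B (for B^(1)_n, level l) is encoded as a
   sequence of 2n+1 naturals, in the order
     x_1, ..., x_n, x_0, xbar_n, ..., xbar_1
   i.e. x_i is at position i-1, x_0 at position n, xbar_i at position 2n+1-i.
   The crystal "0" is encoded by [None]. *)

Definition posx (i : nat) : nat := i.-1.
Definition posx0 (n : nat) : nat := n.
Definition posxb (n i : nat) : nat := (2 * n).+1 - i.

Definition cx (b : seq nat) (i : nat) : nat := nth 0 b (posx i).
Definition cx0 (n : nat) (b : seq nat) : nat := nth 0 b (posx0 n).
Definition cxb (n : nat) (b : seq nat) (i : nat) : nat := nth 0 b (posxb n i).

Definition inB (n l : nat) (b : seq nat) : bool :=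
  [&& size b == (2 * n).+1, cx0 n b <= 1 & sumn b == l].

Definition move (b : seq nat) (p q : nat) : option (seq nat) :=
  if nth 0 b p is k.+1 then
    Some (set_nth 0 (set_nth 0 b p k) q (nth 0 b q).+1)
  else None.

Definition fraw (n i : nat) (b : seq nat) : option (seq nat) :=
  if i == 0 then
    (if cxb n b 2 <= cx b 2 then move b (posxb n 1) (posx 2)
     else move b (posxb n 2) (posx 1))
  else if i < n then
    (if cxb n b i.+1 <= cx b i.+1 then move b (posx i) (posx i.+1)
     else move b (posxb n i.+1) (posxb n i))
  else if i == n then
    (if cx0 n b == 0 then move b (posx n) (posx0 n)
     else move b (posx0 n) (posxb n n))
  else None.

Definition ftil (n l i : nat) (b : seq nat) : option (seq nat) :=
  match fraw n i b with
  | Some r => if inB n l r then Some r else None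
  | None => None
  end.

Definition ftil_iter (n l i k : nat) (ob : option (seq nat)) : option (seq nat) :=
  iter k (fun o => obind (ftil n l i) o) ob.

(* varphi_i and varepsilon_i ; (x)_+ is truncated subtraction on nat *)
Definition phi (n i : nat) (b : seq nat) : nat :=
  if i == 0 then cxb n b 1 + (cxb n b 2 - cx b 2)
  else if i < n then cx b i + (cxb n b i.+1 - cx b i.+1)
  else 2 * cx b n + cx0 n b.

Definition eps (n i : nat) (b : seq nat) : nat :=
  if i == 0 then cx b 1 + (cx b 2 - cxb n b 2)
  else if i < n then cxb n b i + (cx b i.+1 - cxb n b i.+1)
  else 2 * cxb n b n + cx0 n b.

Definition epsj (j : nat) : nat := odd j.

(* <lambda_j, h_i> where lambda_j = l Lambda_{epsilon(j)} *)
Definition lam (l j i : nat) : nat := if i == epsj j then l else 0.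

Definition ground (n l j : nat) : seq nat :=
  if odd j then rcons (nseq (2 * n) 0) l else l :: nseq (2 * n) 0.

Definition idx (n j a : nat) : nat :=
  if (a == 1) || (a == (2 * n).-1) then epsj j.+1
  else if a <= n then a else 2 * n - a.

Fixpoint Bset (n l j a : nat) : seq nat -> Prop :=
  match a with
  | 0 => fun c => c = ground n l j
  | a'.+1 => fun c => exists b k,
      Bset n l j a' b /\ ftil_iter n l (idx n j a) k (Some b) = Some c
  end.

Fixpoint bpt (n l j a : nat) : option (seq nat) :=
  match a with
  | 0 => Some (ground n l j)
  | a'.+1 => obind (fun b => ftil_iter n l (idx n j a) (phi n (idx n j a) b) (Some b))
                   (bpt n l j a')
  end.

Definition single (n l p : nat) : seq nat := set_nth 0 (nseq (2 * n).+1 0) p l.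

Definition supp_in (b : seq nat) (P : pred nat) : Prop :=
  forall p, p < size b -> ~~ P p -> nth 0 b p = 0.

Definition allowedA (n j a : nat) : pred nat := fun p =>
  if odd j then has (fun i => p == posx i) (iota 2 a) || (p == posxb n 1)
  else has (fun i => p == posx i) (iota 1 a.+1).

Definition allowedB (n j a : nat) : pred nat := fun p =>
  if odd j then
    [|| has (fun i => p == posx i) (iota 2 n.-1), p == posx0 n,
        has (fun i => p == posxb n i) (iota (n - a).+1 a) | p == posxb n 1]
  else
    [|| has (fun i => p == posx i) (iota 1 n), p == posx0 n |
        has (fun i => p == posxb n i) (iota (n - a).+1 a)].

(* Main.v *)
Require Import Defs.
From mathcomp Require Import all_boot.
From mathcomp Require Import zify.
Set Warnings "-notation-overridden".
Set Implicit Arguments. Unset Strict Implicit.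


Lemma eq_nth (s1 s2 : seq nat) : size s1 = size s2 ->
  (forall m, nth 0 s1 m = nth 0 s2 m) -> s1 = s2.
Proof. move=> hs h; apply: (@eq_from_nth _ 0) => // m _; exact: h. Qed.

Lemma nth_single n l p m : nth 0 (single n l p) m = if m == p then l else 0.
Proof.
rewrite /single; move: (nseq _ _) (fun m => nth_nseq 0 (2*n).+1 0 m) => s hs.
by rewrite nth_set_nth /= hs if_same.
Qed.

Lemma size_single n l p : p < (2*n).+1 -> size (single n l p) = (2*n).+1.
Proof. move=> h; rewrite /single size_set_nth size_nseq; lia. Qed.

Lemma sumn_setnth s p v : p < size s -> sumn (set_nth 0 s p v) + nth 0 s p = sumn s + v.
Proof.
elim: s p => [|x s IH] [|p] //= hp; first lia.
have := IH p hp; lia.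
Qed.

Lemma sumn_zero s : (forall m, m < size s -> nth 0 s m = 0) -> sumn s = 0.
Proof.
elim: s => [|x s IH] //= h.
have h0 := h 0 isT; rewrite /= in h0; rewrite h0 IH //= => m hm.
exact: (h m.+1).
Qed.

Lemma nth_set (b : seq nat) p v m :
  nth 0 (set_nth 0 b p v) m = if m == p then v else nth 0 b m.
Proof. by rewrite nth_set_nth. Qed.

Definition mv (b : seq nat) p q k :=
  set_nth 0 (set_nth 0 b p (nth 0 b p - k)) q (nth 0 b q + k).

Lemma move_mv b p q : move b p q = if 0 < nth 0 b p then Some (mv b p q 1) else None.
Proof. rewrite /move /mv; case: (nth 0 b p) => [|k] //=; by rewrite subn1 addn1. Qed.

Lemma size_mv b p q k : p < size b -> q < size b -> size (mv b p q k) = size b.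
Proof. move=> hp hq; rewrite /mv !size_set_nth; lia. Qed.

Lemma nth_mv b p q k m : nth 0 (mv b p q k) m =
  if m == q then nth 0 b q + k else if m == p then nth 0 b p - k else nth 0 b m.
Proof. by rewrite /mv !nth_set. Qed.

Lemma sumn_mv b p q k : p != q -> p < size b -> q < size b -> k <= nth 0 b p ->
  sumn (mv b p q k) = sumn b.
Proof.
move=> pq hp hq hk; rewrite /mv.
have h1 := @sumn_setnth b p (nth 0 b p - k) hp.
have hq' : q < size (set_nth 0 b p (nth 0 b p - k)) by rewrite size_set_nth; lia.
have h2 := @sumn_setnth _ q (nth 0 b q + k) hq'.
move: h2; rewrite nth_set; case: eqP => [e|_]; [by move: pq; rewrite e eqxx|lia].
Qed.

Lemma inB_mv n l b p q k : inB n l b -> p != q -> p < (2*n).+1 -> q < (2*n).+1 ->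
  k <= nth 0 b p -> nth 0 (mv b p q k) n <= 1 -> inB n l (mv b p q k).
Proof.
case/and3P => /eqP hs h0 /eqP hsum pq hp hq hk hn.
rewrite /inB size_mv ?hs // eqxx /cx0 /posx0 hn sumn_mv ?hs // hsum eqxx //.
Qed.

Ltac nsimpl := rewrite ?nth_mv ?nth_single /=.
Ltac casel := repeat (case: eqP => ? /=); try lia.

Ltac dec := repeat match goal with |- context [?x == ?y] =>
   (rewrite (_ : (x == y) = false); last by lia) || (rewrite (_ : (x == y) = true); last by lia) end;
   cbv beta iota.
Ltac negs := repeat (rewrite ?eqxx; match goal with
  | H : is_true (?x != ?y) |- context [?x == ?y] => rewrite (negbTE H)
  | H : is_true (?x != ?y) |- context [?y == ?x] => rewrite (eq_sym y x) (negbTE H)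
  | H : ?x <> ?y |- context [?x == ?y] => rewrite (introF eqP H)
  | H : ?x <> ?y |- context [?y == ?x] => rewrite (eq_sym y x) (introF eqP H)
  end); rewrite ?eqxx; cbv beta iota.
Ltac case1 := case: eqP; [let H := fresh "H" in move=> H; try rewrite H | move=> ?].
Ltac solve_nth := rewrite ?nth_mv ?nth_single; negs; repeat (case1; negs); try lia.



Definition pP (n i : nat) : nat := if i == 0 then posxb n 1 else posx i.
Definition pQ (n i : nat) : nat := if i == 0 then posx 2 else posx i.+1.
Definition pR (n i : nat) : nat := if i == 0 then posxb n 2 else posxb n i.+1.
Definition pS (n i : nat) : nat := if i == 0 then posx 1 else posxb n i.

Definition goodpos (n P Q R S : nat) : Prop :=
 [/\ [/\ P != Q, P != R, P != S, Q != R & Q != S], R != S,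
     [/\ P < (2*n).+1, Q < (2*n).+1, R < (2*n).+1 & S < (2*n).+1] &
     [/\ P != n, Q != n, R != n & S != n]].

Lemma goodposA n i : 3 <= n -> i < n -> goodpos n (pP n i) (pQ n i) (pR n i) (pS n i).
Proof.
move=> hn hi; rewrite /goodpos /pP /pQ /pR /pS /posx /posxb.
case: (i =P 0) => [_|h] /=; (split; [split|idtac|split|split]; lia).
Qed.

Lemma fraw_A n i b : i < n -> fraw n i b =
  if nth 0 b (pR n i) <= nth 0 b (pQ n i) then move b (pP n i) (pQ n i)
  else move b (pR n i) (pS n i).
Proof.
move=> hi; rewrite /fraw /pP /pQ /pR /pS /cx /cxb.
case: (i =P 0) => [_|h] //=; by rewrite hi.
Qed.

Definition Fspec (n l i P Q R S : nat) : Prop :=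
  forall c, inB n l c -> ftil n l i c =
    if nth 0 c R <= nth 0 c Q then (if 0 < nth 0 c P then Some (mv c P Q 1) else None)
    else (if 0 < nth 0 c R then Some (mv c R S 1) else None).

Lemma inB_size n l c : inB n l c -> size c = (2*n).+1.
Proof. by case/and3P => /eqP. Qed.
Lemma inB_x0 n l c : inB n l c -> nth 0 c n <= 1.
Proof. by case/and3P. Qed.

Lemma FspecA n l i : 3 <= n -> i < n ->
  Fspec n l i (pP n i) (pQ n i) (pR n i) (pS n i).
Proof.
move=> hn hi c hc; have := goodposA hn hi.
move: (pP n i) (pQ n i) (pR n i) (pS n i) (fraw_A c hi) => P Q R S hf.
case=> [[? ? ? ? ?] ? [? ? ? ?] [? ? ? ?]].
have h0 := inB_x0 hc.
rewrite /ftil hf !move_mv.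
case: ifP => _; case: ifP => h //; rewrite inB_mv //; try lia; solve_nth.
Qed.

Lemma mv0 b p q : p < size b -> q < size b -> mv b p q 0 = b.
Proof. move=> hp hq; apply: eq_nth; first by rewrite size_mv. move=> m; solve_nth. Qed.

Lemma mvS b p q k : p != q -> p < size b -> q < size b -> k < nth 0 b p ->
  mv (mv b p q k) p q 1 = mv b p q k.+1.
Proof.
move=> pq hp hq hk; apply: eq_nth; first by rewrite !size_mv ?size_mv.
move=> m; solve_nth.
Qed.

Lemma ftil_iterS n l i k ob :
  ftil_iter n l i k.+1 ob = obind (ftil n l i) (ftil_iter n l i k ob).
Proof. by []. Qed.

Lemma ftil_iterD n l i k1 k2 ob :
  ftil_iter n l i (k1 + k2) ob = ftil_iter n l i k2 (ftil_iter n l i k1 ob).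
Proof. by rewrite /ftil_iter addnC iterD. Qed.

Lemma ftil_iter0 n l i ob : ftil_iter n l i 0 ob = ob.
Proof. by []. Qed.

Section Phases.
Variables (n l i P Q R S : nat).
Hypothesis HF : Fspec n l i P Q R S.
Hypothesis G : goodpos n P Q R S.

Lemma phaseX b k : inB n l b -> nth 0 b R <= nth 0 b Q -> k <= nth 0 b P ->
  ftil_iter n l i k (Some b) = Some (mv b P Q k).
Proof.
case: G => [[? ? ? ? ?] ? [? ? ? ?] [? ? ? ?]] hb hRQ.
have hs := inB_size hb.
elim: k => [|k IH] hk; first by rewrite ftil_iter0 mv0 ?hs.
rewrite ftil_iterS IH /=; last lia.
have hb' : inB n l (mv b P Q k).
  apply: inB_mv => //; try lia. have := inB_x0 hb. solve_nth.
rewrite HF //.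
rewrite (_ : nth 0 (mv b P Q k) R <= nth 0 (mv b P Q k) Q); last by solve_nth.
rewrite (_ : 0 < nth 0 (mv b P Q k) P); last by solve_nth.
by rewrite mvS ?hs //; lia.
Qed.

Lemma phaseY b k : inB n l b -> nth 0 b Q + k <= nth 0 b R ->
  ftil_iter n l i k (Some b) = Some (mv b R S k).
Proof.
case: G => [[? ? ? ? ?] ? [? ? ? ?] [? ? ? ?]] hb.
have hs := inB_size hb.
elim: k => [|k IH] hk; first by rewrite ftil_iter0 mv0 ?hs.
rewrite ftil_iterS IH /=; last lia.
have hb' : inB n l (mv b R S k).
  apply: inB_mv => //; try lia. have := inB_x0 hb. solve_nth.
rewrite HF //.
rewrite (_ : nth 0 (mv b R S k) R <= nth 0 (mv b R S k) Q = false); last by solve_nth.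
rewrite (_ : 0 < nth 0 (mv b R S k) R); last by solve_nth.
by rewrite mvS ?hs //; lia.
Qed.

Lemma reachA c : inB n l c -> exists b k, [/\ inB n l b,
  ftil_iter n l i k (Some b) = Some c,
  [/\ nth 0 b S = 0, nth 0 b R = nth 0 c R + nth 0 c S,
      nth 0 b Q = minn (nth 0 c Q) (nth 0 c R) &
      nth 0 b P = nth 0 c P + (nth 0 c Q - nth 0 c R)] &
  forall m, m != P -> m != Q -> m != R -> m != S -> nth 0 b m = nth 0 c m].
Proof.
move=> hc; have hs := inB_size hc; have h0 := inB_x0 hc.
have G' := G; case: G' => [[? ? ? ? ?] ? [? ? ? ?] [? ? ? ?]].
have hb1 : inB n l (mv c S R (nth 0 c S)).
  apply: inB_mv => //; try lia. solve_nth.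
case: (leqP (nth 0 c Q) (nth 0 c R)) => hQR.
- exists (mv c S R (nth 0 c S)), (nth 0 c S); split => //.
  + rewrite phaseY //; last by solve_nth.
    congr Some; apply: eq_nth; first by rewrite !size_mv ?size_mv ?hs.
    move=> m; solve_nth.
  + split; solve_nth.
  + move=> m *; solve_nth.
- set b1 := mv c S R (nth 0 c S).
  have hb : inB n l (mv b1 Q P (nth 0 c Q - nth 0 c R)).
    apply: inB_mv => //; try lia; rewrite /b1; solve_nth.
  exists (mv b1 Q P (nth 0 c Q - nth 0 c R)), (nth 0 c S + (nth 0 c Q - nth 0 c R)).
  split => //.
  + rewrite ftil_iterD phaseY //; last by rewrite /b1; solve_nth.
    have hb2 : inB n l (mv (mv b1 Q P (nth 0 c Q - nth 0 c R)) R S (nth 0 c S)).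
      apply: inB_mv => //; try lia; rewrite /b1; solve_nth.
    rewrite phaseX //; try by rewrite /b1; solve_nth.
    congr Some; apply: eq_nth; first by rewrite /b1 !size_mv ?size_mv ?hs.
    move=> m; rewrite /b1; solve_nth.
  + rewrite /b1; split; solve_nth.
  + move=> m *; rewrite /b1; solve_nth.
Qed.

End Phases.

Lemma supp_mv c (A : pred nat) p q k : supp_in c A -> A q -> p < size c -> q < size c ->
  p != q -> supp_in (mv c p q k) A.
Proof.
move=> hc hq hp hq' pq m; rewrite size_mv // => hm hA.
rewrite nth_mv; case: eqP => [e|_]; first by move: hA; rewrite e hq.
case: eqP => [e|_]; last exact: hc.
by have := hc m hm hA; rewrite e => ->.
Qed.

Lemma Bstep n l j a (A A' : pred nat) :
 (forall c, Bset n l j a c <-> inB n l c /\ supp_in c A) ->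
 (forall c c', inB n l c -> supp_in c A' -> ftil n l (idx n j a.+1) c = Some c' ->
     supp_in c' A') ->
 (forall p, A p -> A' p) ->
 (forall c, inB n l c -> supp_in c A' -> exists b k,
     [/\ inB n l b, supp_in b A & ftil_iter n l (idx n j a.+1) k (Some b) = Some c]) ->
 forall c, Bset n l j a.+1 c <-> inB n l c /\ supp_in c A'.
Proof.
move=> IH hcl hsub hre c /=; split.
- case=> b [k [/IH [hb hbA] hk]].
  have hbA' : supp_in b A'.
    move=> m hm hn; apply: hbA => //; apply/negP => /hsub; apply/negP; done.
  elim: k c hk => [|k IHk] c; first by rewrite ftil_iter0; case=> <-.
  rewrite ftil_iterS.
  case E: (ftil_iter n l _ k (Some b)) => [c0|] //= hc.
  have [h1 h2] := IHk c0 E.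
  split; last exact: hcl hc.
  by move: hc; rewrite /ftil; case: fraw => // r; case: ifP => // ? [<-].
- case=> hc hcA; have [b [k [hb hbA hk]]] := hre c hc hcA.
  by exists b, k; split => //; apply/IH.
Qed.

Lemma closeA n l i P Q R S (A : pred nat) : Fspec n l i P Q R S -> goodpos n P Q R S ->
  (A P -> A Q) -> (A R -> A S) ->
  forall c c', inB n l c -> supp_in c A -> ftil n l i c = Some c' -> supp_in c' A.
Proof.
move=> HF G hPQ hRS c c' hc hcA; have hs := inB_size hc.
case: G => [[? ? ? ? ?] ? [? ? ? ?] [? ? ? ?]].
rewrite HF //; case: ifP => _; case: ifP => // hp [<-]; apply: supp_mv; rewrite ?hs //.
- apply: hPQ; apply/negPn/negP => hA; move: hp; rewrite hcA ?hs //.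
- apply: hRS; apply/negPn/negP => hA; move: hp; rewrite hcA ?hs //.
Qed.

Lemma reachA_supp n l i P Q R S (A A' : pred nat) : Fspec n l i P Q R S -> goodpos n P Q R S ->
  A P -> (~~ A R -> ~~ A' R && ~~ A' S) -> (~~ A Q -> ~~ A' Q || ~~ A' R) ->
  (forall m, m < (2*n).+1 -> m != P -> m != Q -> m != R -> m != S -> ~~ A m -> ~~ A' m) ->
  forall c, inB n l c -> supp_in c A' -> exists b k,
     [/\ inB n l b, supp_in b A & ftil_iter n l i k (Some b) = Some c].
Proof.
move=> HF G hP hR hQ hm c hc hcA.
have [b [k [hb hk [h1 h2 h3 h4] h5]]] := reachA HF G hc.
exists b, k; split => //.
have hs := inB_size hc; have hsb := inB_size hb.
case: G => [[? ? ? ? ?] ? [? ? ? ?] [? ? ? ?]].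
move=> m; rewrite hsb => hmN hAm.
case: (m =P S) => [e|nS]; first by rewrite e h1.
case: (m =P R) => [e|nR].
  move: hAm; rewrite e h2 => /hR /andP [a1 a2].
  by rewrite (hcA R (_ : R < size c) a1) ?(hcA S (_ : S < size c) a2) // hs.
case: (m =P Q) => [e|nQ].
  move: hAm; rewrite e h3 => /hQ /orP [] a1.
    by rewrite (hcA Q (_ : Q < size c) a1) ?min0n // hs.
  by rewrite (hcA R (_ : R < size c) a1) ?minn0 // hs.
case: (m =P P) => [e|nP]; first by move: hAm; rewrite e hP.
have e5 := h5 m (introN eqP nP) (introN eqP nQ) (introN eqP nR) (introN eqP nS).
rewrite e5; apply: hcA; first by rewrite hs.
exact: hm hmN (introN eqP nP) (introN eqP nQ) (introN eqP nR) (introN eqP nS) hAm.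
Qed.


Lemma ftil_n n l c : 3 <= n -> inB n l c -> ftil n l n c =
  if nth 0 c n == 0 then (if 0 < nth 0 c n.-1 then Some (mv c n.-1 n 1) else None)
  else (if 0 < nth 0 c n then Some (mv c n n.+1 1) else None).
Proof.
move=> hn hc; have hs := inB_size hc; have h0 := inB_x0 hc.
have d1 : n.-1 != n by lia. have d2 : n.-1 != n.+1 by lia. have d3 : n != n.+1 by lia.
rewrite /ftil /fraw (_ : (n == 0) = false); last by lia.
rewrite ltnn eqxx /cx0 /posx0 /posx (_ : posxb n n = n.+1); last by rewrite /posxb; lia.
rewrite !move_mv.
case: ifP => hz; case: ifP => hp //; rewrite inB_mv //; try lia; solve_nth.
Qed.

Section PhaseN.
Variables (n l : nat).
Hypothesis hn : 3 <= n.

Lemma phaseN b : inB n l b -> nth 0 b n = 0 -> forall m, m <= nth 0 b n.-1 ->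
  ftil_iter n l n (2 * m) (Some b) = Some (mv b n.-1 n.+1 m) /\
  (m < nth 0 b n.-1 -> ftil_iter n l n (2 * m).+1 (Some b) =
     Some (mv (mv b n.-1 n.+1 m) n.-1 n 1)).
Proof.
move=> hb hz; have hs := inB_size hb; have h0 := inB_x0 hb.
have d1 : n.-1 != n by lia. have d2 : n.-1 != n.+1 by lia. have d3 : n != n.+1 by lia.
have step : forall m, m < nth 0 b n.-1 ->
    ftil_iter n l n (2 * m) (Some b) = Some (mv b n.-1 n.+1 m) ->
    ftil_iter n l n (2 * m).+1 (Some b) = Some (mv (mv b n.-1 n.+1 m) n.-1 n 1).
  move=> m hm E; rewrite ftil_iterS E /=.
  have hb' : inB n l (mv b n.-1 n.+1 m) by apply: inB_mv => //; try lia; solve_nth.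
  rewrite ftil_n //.
  rewrite (_ : nth 0 (mv b n.-1 n.+1 m) n == 0); last by solve_nth.
  by rewrite (_ : 0 < nth 0 (mv b n.-1 n.+1 m) n.-1); last by solve_nth.
elim=> [|m IH] hm.
  have E : ftil_iter n l n (2 * 0) (Some b) = Some (mv b n.-1 n.+1 0).
    by rewrite muln0 ftil_iter0 mv0 ?hs //; lia.
  by split => // h; apply: step.
have [IH1 IH2] := IH (ltnW hm).
have E : ftil_iter n l n (2 * m.+1) (Some b) = Some (mv b n.-1 n.+1 m.+1).
  rewrite (_ : 2 * m.+1 = (2 * m).+1.+1); last by lia.
  rewrite ftil_iterS IH2 //=.
  set u := mv (mv b n.-1 n.+1 m) n.-1 n 1.
  have hu : inB n l u by rewrite /u; apply: inB_mv; try lia;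
     [apply: inB_mv => //; try lia; solve_nth | solve_nth | solve_nth].
  rewrite ftil_n // (_ : nth 0 u n == 0 = false); last by rewrite /u; solve_nth.
  rewrite (_ : 0 < nth 0 u n); last by rewrite /u; solve_nth.
  congr Some; apply: eq_nth; first by rewrite /u !size_mv ?size_mv ?hs //; lia.
  move=> k; rewrite /u; solve_nth.
by split => // h; apply: step.
Qed.

Lemma reachN c : inB n l c -> exists b k, [/\ inB n l b,
  ftil_iter n l n k (Some b) = Some c,
  [/\ nth 0 b n = 0, nth 0 b n.+1 = 0 &
      nth 0 b n.-1 = nth 0 c n.-1 + nth 0 c n + nth 0 c n.+1] &
  forall m, m != n.-1 -> m != n -> m != n.+1 -> nth 0 b m = nth 0 c m].
Proof.
move=> hc; have hs := inB_size hc; have h0 := inB_x0 hc.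
have d1 : n.-1 != n by lia. have d2 : n.-1 != n.+1 by lia. have d3 : n != n.+1 by lia.
set b1 := mv c n n.-1 (nth 0 c n).
have hb1 : inB n l b1 by apply: inB_mv; try lia; solve_nth.
set b := mv b1 n.+1 n.-1 (nth 0 c n.+1).
have hb : inB n l b by apply: inB_mv; try lia; rewrite /b1; solve_nth.
have hbz : nth 0 b n = 0 by rewrite /b /b1; solve_nth.
have hbx : nth 0 b n.-1 = nth 0 c n.-1 + nth 0 c n + nth 0 c n.+1 by rewrite /b /b1; solve_nth.
have := phaseN hb hbz (m := nth 0 c n.+1); rewrite hbx => -[//|E1 E2]; first by lia.
exists b, (2 * nth 0 c n.+1 + nth 0 c n); split => //.
- case: (nth 0 c n =P 0) => [e|e].
  + rewrite e addn0 E1; congr Some; apply: eq_nth.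
      by rewrite /b /b1 !size_mv ?size_mv ?hs //; lia.
    move=> k; rewrite /b /b1; solve_nth.
  + rewrite (_ : nth 0 c n = 1); last by lia.
    rewrite addn1 E2; last by lia.
    congr Some; apply: eq_nth.
      by rewrite /b /b1 !size_mv ?size_mv ?hs //; lia.
    move=> k; rewrite /b /b1; solve_nth.
- split => //; rewrite /b /b1; solve_nth.
- move=> m *; rewrite /b /b1; solve_nth.
Qed.

End PhaseN.


Definition Al (n j a : nat) : pred nat := fun p =>
  (a == (2*n).-1) || (odd j && (((0 < p) && (p <= a + (n <= a))) || (p == 2*n)))
  || (~~ odd j && (p <= a + (n <= a))).

Lemma stepA n l j a i : 3 <= n -> i < n -> idx n j a.+1 = i ->
 (forall c, Bset n l j a c <-> inB n l c /\ supp_in c (Al n j a)) ->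
 (Al n j a.+1 (pP n i) -> Al n j a.+1 (pQ n i)) ->
 (Al n j a.+1 (pR n i) -> Al n j a.+1 (pS n i)) ->
 (forall p, Al n j a p -> Al n j a.+1 p) ->
 Al n j a (pP n i) ->
 (~~ Al n j a (pR n i) -> ~~ Al n j a.+1 (pR n i) && ~~ Al n j a.+1 (pS n i)) ->
 (~~ Al n j a (pQ n i) -> ~~ Al n j a.+1 (pQ n i) || ~~ Al n j a.+1 (pR n i)) ->
 (forall m, m < (2*n).+1 -> m != pP n i -> m != pQ n i -> m != pR n i -> m != pS n i ->
    ~~ Al n j a m -> ~~ Al n j a.+1 m) ->
 forall c, Bset n l j a.+1 c <-> inB n l c /\ supp_in c (Al n j a.+1).
Proof.
move=> hn hi hidx IH c1 c2 c3 c4 c5 c6 c7.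
have HF := @FspecA n l i hn hi; have G := goodposA hn hi.
apply: Bstep => //; rewrite hidx.
- exact: closeA HF G c1 c2.
- exact: reachA_supp HF G c4 c5 c6 c7.
Qed.

Lemma stepN n l j a : 3 <= n -> idx n j a.+1 = n ->
 (forall c, Bset n l j a c <-> inB n l c /\ supp_in c (Al n j a)) ->
 Al n j a.+1 n -> Al n j a.+1 n.+1 ->
 (forall p, Al n j a p -> Al n j a.+1 p) ->
 Al n j a n.-1 ->
 (forall m, m < (2*n).+1 -> m != n.-1 -> m != n -> m != n.+1 -> ~~ Al n j a m -> ~~ Al n j a.+1 m) ->
 forall c, Bset n l j a.+1 c <-> inB n l c /\ supp_in c (Al n j a.+1).
Proof.
move=> hn hidx IH c1 c2 c3 c4 c5.
apply: Bstep => //; rewrite hidx.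
- move=> c c' hc hcA; have hs := inB_size hc.
  rewrite ftil_n //; case: ifP => _; case: ifP => // _ [<-];
    apply: supp_mv => //; rewrite ?hs; lia.
- move=> c hc hcA; have [b [k [hb hk [h1 h2 h3] h4]]] := @reachN n l hn c hc.
  exists b, k; split => //.
  have hs := inB_size hc.
  move=> m; rewrite (inB_size hb) => hm hA.
  case: (m =P n) => [->//|e1]; case: (m =P n.+1) => [->//|e2].
  case: (m =P n.-1) => [e3|e3]; first by move: hA; rewrite e3 c4.
  rewrite h4; try by apply/eqP.
  apply: hcA; first by rewrite hs.
  by apply: c5 => //; rewrite -?hs //; apply/eqP.
Qed.


Lemma ground_single n l j : ground n l j = single n l (if odd j then 2*n else 0).
Proof.
apply: eq_nth.
  rewrite size_single; last by case: ifP; lia.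
  by rewrite /ground; case: ifP => _; rewrite ?size_rcons /= size_nseq.
move=> m; rewrite nth_single /ground; case: ifP => _.
  rewrite nth_rcons size_nseq nth_nseq if_same.
  by case: ltnP => h; case: eqP => //; lia.
by case: m => [|m] //=; rewrite nth_nseq if_same.
Qed.

Lemma inB_single n l p : p < (2*n).+1 -> p != n -> inB n l (single n l p).
Proof.
move=> hp hpn; rewrite /inB size_single // eqxx /cx0 /posx0 nth_single.
rewrite (negbTE (_ : n != p)) 1?eq_sym //=.
have h := @sumn_setnth (nseq (2*n).+1 0) p l; rewrite size_nseq in h.
have := h hp; rewrite nth_nseq if_same addn0 /single => ->.
rewrite (@sumn_zero (nseq _ 0)) //.
by move=> m _; rewrite nth_nseq if_same.
Qed.

Lemma single_char n l p0 (A : pred nat) : p0 < (2*n).+1 -> p0 != n ->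
  (forall p, A p = (p == p0)) ->
  forall c, (inB n l c /\ supp_in c A) <-> c = single n l p0.
Proof.
move=> hp hpn hA c; split.
- case=> hc hcA; have hs := inB_size hc.
  have hz : forall m, m != p0 -> nth 0 c m = 0.
    move=> m hm; case: (ltnP m (size c)) => h; first by apply: hcA; rewrite // hA.
    by rewrite nth_default.
  apply: eq_nth; first by rewrite size_single // hs.
  move=> m; rewrite nth_single; case: eqP => [->|/eqP h]; last exact: hz.
  case/and3P: hc => _ _ /eqP hsum.
  have := @sumn_setnth c p0 0; rewrite hs => /(_ hp).
  rewrite (@sumn_zero (set_nth 0 c p0 0)) ?hsum //.
    by rewrite addn0.
  by move=> k _; rewrite nth_set; case: eqP => // /eqP; apply: hz.
- move=> ->; split; first exact: inB_single.
  by move=> m _; rewrite hA nth_single => /negbTE ->.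
Qed.

Lemma idx_lo n j a : 3 <= n -> 2 <= a <= n -> idx n j a = a.
Proof. move=> hn ha; rewrite /idx; dec; rewrite /= (_ : a <= n) //; lia. Qed.

Lemma idx_hi n j a : n < a < (2*n).-1 -> idx n j a = 2 * n - a.
Proof. move=> ha; rewrite /idx; dec; rewrite /= (_ : a <= n = false) //; lia. Qed.

Lemma idx_e n j a : (a == 1) || (a == (2*n).-1) -> idx n j a = odd j.+1.
Proof. by rewrite /idx => ->. Qed.

Lemma pP0 n : pP n 0 = (2*n).+1 - 1. Proof. by []. Qed.
Lemma pQ0 n : pQ n 0 = 1. Proof. by []. Qed.
Lemma pR0 n : pR n 0 = (2*n).+1 - 2. Proof. by []. Qed.
Lemma pS0 n : pS n 0 = 0. Proof. by []. Qed.
Lemma pPS n i : pP n i.+1 = i. Proof. by []. Qed.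
Lemma pQS n i : pQ n i.+1 = i.+1. Proof. by []. Qed.
Lemma pRS n i : pR n i.+1 = (2*n).+1 - i.+2. Proof. by []. Qed.
Lemma pSS n i : pS n i.+1 = (2*n).+1 - i.+1. Proof. by []. Qed.

Lemma supp_ext c (A B : pred nat) : (forall p, A p = B p) -> supp_in c A <-> supp_in c B.
Proof. by move=> h; split => H p hp; [rewrite -h | rewrite h]; apply: H. Qed.

Lemma stepA' n l j a i (A A' : pred nat) : 3 <= n -> i < n -> idx n j a.+1 = i ->
 (forall p, Al n j a p = A p) -> (forall p, Al n j a.+1 p = A' p) ->
 (forall c, Bset n l j a c <-> inB n l c /\ supp_in c (Al n j a)) ->
 (A' (pP n i) -> A' (pQ n i)) ->
 (A' (pR n i) -> A' (pS n i)) ->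
 (forall p, A p -> A' p) ->
 A (pP n i) ->
 (~~ A (pR n i) -> ~~ A' (pR n i) && ~~ A' (pS n i)) ->
 (~~ A (pQ n i) -> ~~ A' (pQ n i) || ~~ A' (pR n i)) ->
 (forall m, m < (2*n).+1 -> m != pP n i -> m != pQ n i -> m != pR n i -> m != pS n i ->
    ~~ A m -> ~~ A' m) ->
 forall c, Bset n l j a.+1 c <-> inB n l c /\ supp_in c (Al n j a.+1).
Proof.
move=> hn hi hidx EA EA' IH c1 c2 c3 c4 c5 c6 c7.
have HF := @FspecA n l i hn hi; have G := goodposA hn hi.
have IH' : forall c, Bset n l j a c <-> inB n l c /\ supp_in c A.
  by move=> c; rewrite IH (supp_ext c EA).
move=> c; rewrite (supp_ext c EA').
apply: (Bstep IH') => //; rewrite hidx.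
- exact: closeA HF G c1 c2.
- exact: reachA_supp HF G c4 c5 c6 c7.
Qed.

Ltac pc := rewrite ?pP0 ?pQ0 ?pR0 ?pS0 ?pPS ?pQS ?pRS ?pSS /Al; cbv beta; intros; lia.

Lemma Bchar n l j : 3 <= n -> forall a, a <= (2*n).-1 ->
  forall c, Bset n l j a c <-> inB n l c /\ supp_in c (Al n j a).
Proof.
move=> hn; elim=> [|a IH] ha.
  move=> c; rewrite /= ground_single; symmetry; apply: single_char.
  - by case: ifP; lia.
  - by case: ifP; lia.
  - by move=> p; rewrite /Al; case: (odd j); lia.
have {}IH := IH (ltnW ha).
case: (posnP a) => [a0|apos].
  subst a; case hj: (odd j).
    by eapply (@stepA _ _ _ _ 0); try done; try pc; rewrite idx_e //= hj.
  by eapply (@stepA _ _ _ _ 1); try done; try pc; rewrite idx_e //= hj.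
case: (ltnP a n.-1) => h1.
  by eapply (@stepA _ _ _ _ a.+1); try done; try pc; rewrite idx_lo //; lia.
case: (ltnP n.-1 a) => h2; last first.
  have e : a = n.-1 by lia.
  by subst a; eapply stepN; try done; try pc; rewrite idx_lo; lia.
case: (ltnP a (2*n).-2) => h3.
  have [b hb] : exists b, a + b.+2 = 2 * n by exists (2*n - a.+2); lia.
  have hi : idx n j a.+1 = b.+1 by rewrite idx_hi; lia.
  have eR : pR n b.+1 = a.+1 by rewrite pRS; lia.
  have eS : pS n b.+1 = a.+2 by rewrite pSS; lia.
  have e0 : (a == (2*n).-1) = false by lia.
  have e0' : (a.+1 == (2*n).-1) = false by lia.
  have e1 : n <= a by lia.
  have e1' : n <= a.+1 by lia.
  case hj: (odd j).
    eapply (@stepA' _ _ _ _ b.+1 (fun p => ((0 < p) && (p <= a.+1)) || (p == 2*n))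
                                 (fun p => ((0 < p) && (p <= a.+2)) || (p == 2*n))); try done; try lia;
      try (by move=> p; rewrite /Al hj ?e0 ?e0' ?e1 ?e1' /= ?orbF ?addn1);
      rewrite ?pPS ?pQS ?eR ?eS; intros; lia.
  eapply (@stepA' _ _ _ _ b.+1 (fun p => p <= a.+1) (fun p => p <= a.+2)); try done; try lia;
    try (by move=> p; rewrite /Al hj ?e0 ?e0' ?e1 ?e1' /= ?orbF ?addn1);
    rewrite ?pPS ?pQS ?eR ?eS; intros; lia.
have e : a = (2*n).-2 by lia.
have e1 : idx n j a.+1 = odd j.+1 by rewrite idx_e //; lia.
case hj: (odd j).
  by eapply (@stepA _ _ _ _ 0); try done; try pc; rewrite e1 /= hj.
by eapply (@stepA _ _ _ _ 1); try done; try pc; rewrite e1 /= hj.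
Qed.


Lemma bptS n l j a s : bpt n l j a = Some s ->
  bpt n l j a.+1 = ftil_iter n l (idx n j a.+1) (phi n (idx n j a.+1) s) (Some s).
Proof. by move=> h; rewrite /= h. Qed.

Lemma phiA n i c : i < n ->
  phi n i c = nth 0 c (pP n i) + (nth 0 c (pR n i) - nth 0 c (pQ n i)).
Proof. move=> hi; rewrite /phi /pP /pQ /pR /cx /cxb; case: (i =P 0) => [_|h] //=; by rewrite hi. Qed.

Lemma epsA n i c : i < n ->
  eps n i c = nth 0 c (pS n i) + (nth 0 c (pQ n i) - nth 0 c (pR n i)).
Proof. move=> hi; rewrite /eps /pS /pQ /pR /cx /cxb; case: (i =P 0) => [_|h] //=; by rewrite hi. Qed.

Lemma bstepX n l i : 3 <= n -> i < n ->
  ftil_iter n l i l (Some (single n l (pP n i))) = Some (single n l (pQ n i)).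
Proof.
move=> hn hi; have HF := @FspecA n l i hn hi; have G := goodposA hn hi.
have G' := G; case: G' => [[? ? ? ? ?] ? [? ? ? ?] [? ? ? ?]].
rewrite (phaseX HF G); first last.
- by rewrite nth_single eqxx.
- by rewrite !nth_single (negbTE (_ : pR n i != pP n i)) 1?eq_sym // (negbTE (_ : pQ n i != pP n i)) 1?eq_sym.
- exact: inB_single.
congr Some; apply: eq_nth; first by rewrite size_mv ?size_single.
move=> m; solve_nth.
Qed.

Lemma bstepY n l i : 3 <= n -> i < n ->
  ftil_iter n l i l (Some (single n l (pR n i))) = Some (single n l (pS n i)).
Proof.
move=> hn hi; have HF := @FspecA n l i hn hi; have G := goodposA hn hi.
have G' := G; case: G' => [[? ? ? ? ?] ? [? ? ? ?] [? ? ? ?]].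
rewrite (phaseY HF G); first last.
- by rewrite !nth_single eqxx (negbTE (_ : pQ n i != pR n i)).
- exact: inB_single.
congr Some; apply: eq_nth; first by rewrite size_mv ?size_single.
move=> m; solve_nth.
Qed.

Definition tp (n j a : nat) : nat :=
  if a == 0 then (if odd j then 2*n else 0)
  else if a == (2*n).-1 then (if odd j then 0 else 2*n) else a + (n <= a).

Lemma bX n l j a i : 3 <= n -> i < n -> idx n j a.+1 = i ->
  tp n j a = pP n i -> tp n j a.+1 = pQ n i ->
  bpt n l j a = Some (single n l (tp n j a)) ->
  bpt n l j a.+1 = Some (single n l (tp n j a.+1)).
Proof.
move=> hn hi hidx e1 e2 h; rewrite (bptS h) hidx e1 e2.
have G := goodposA hn hi; case: G => [[? ? ? ? ?] ? [? ? ? ?] [? ? ? ?]].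
rewrite (_ : phi n i _ = l) ?bstepX //.
rewrite phiA // !nth_single; negs; lia.
Qed.

Lemma bY n l j a i : 3 <= n -> i < n -> idx n j a.+1 = i ->
  tp n j a = pR n i -> tp n j a.+1 = pS n i ->
  bpt n l j a = Some (single n l (tp n j a)) ->
  bpt n l j a.+1 = Some (single n l (tp n j a.+1)).
Proof.
move=> hn hi hidx e1 e2 h; rewrite (bptS h) hidx e1 e2.
have G := goodposA hn hi; case: G => [[? ? ? ? ?] ? [? ? ? ?] [? ? ? ?]].
rewrite (_ : phi n i _ = l) ?bstepY //.
rewrite phiA // !nth_single; negs; lia.
Qed.

Ltac tpc := rewrite /tp ?pP0 ?pQ0 ?pR0 ?pS0 ?pPS ?pQS ?pRS ?pSS; dec; lia.

Lemma bpt_expl n l j : 3 <= n -> 1 <= l -> forall a, a <= (2*n).-1 ->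
  bpt n l j a = Some (single n l (tp n j a)).
Proof.
move=> hn hl; elim=> [|a IH] ha.
  by rewrite /= ground_single /tp.
have {}IH := IH (ltnW ha).
case: (posnP a) => [a0|apos].
  subst a; case hj: (odd j).
    by apply: (@bX _ _ _ _ 0); try done; try lia; try (rewrite idx_e //= hj; done); try (rewrite e1 /= hj; done); try (rewrite idx_lo //; lia); try (rewrite idx_hi //; lia); try (rewrite /tp hj; tpc); try tpc.
  by apply: (@bX _ _ _ _ 1); try done; try lia; try (rewrite idx_e //= hj; done); try (rewrite e1 /= hj; done); try (rewrite idx_lo //; lia); try (rewrite idx_hi //; lia); try (rewrite /tp hj; tpc); try tpc.
case: (ltnP a n.-1) => h1.
  by apply: (@bX _ _ _ _ a.+1); try done; try lia; try (rewrite idx_e //= hj; done); try (rewrite e1 /= hj; done); try (rewrite idx_lo //; lia); try (rewrite idx_hi //; lia); try (rewrite /tp hj; tpc); try tpc.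
case: (ltnP n.-1 a) => h2; last first.
  have e : a = n.-1 by lia.
  have e1 : tp n j a = n.-1 by rewrite /tp; dec; lia.
  rewrite (bptS IH) (idx_lo _ hn); last lia.
  rewrite (_ : a.+1 = n); last lia.
  rewrite e1 /phi (_ : (n == 0) = false); last lia.
  rewrite ltnn /cx /cx0 /posx /posx0 !nth_single eqxx (_ : (n == n.-1) = false); last lia.
  have hb : inB n l (single n l n.-1) by apply: inB_single; lia.
  have hz : nth 0 (single n l n.-1) n = 0 by rewrite nth_single; dec.
  have hl' : l <= nth 0 (single n l n.-1) n.-1 by rewrite nth_single eqxx.
  have [E1 _] := @phaseN n l hn _ hb hz l hl'.
  have e2 : tp n j n = n.+1 by rewrite /tp; dec; lia.
  rewrite addn0 E1 e2; congr Some; apply: eq_nth.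
    by rewrite size_mv ?size_single //; lia.
  by move=> m; solve_nth.
case: (ltnP a (2*n).-2) => h3.
  by apply: (@bY _ _ _ _ (2 * n - a.+2).+1); try done; try lia; try (rewrite idx_hi; lia); try tpc.
have e : a = (2*n).-2 by lia.
have e1 : idx n j a.+1 = odd j.+1 by rewrite idx_e //; lia.
case hj: (odd j).
  by apply: (@bY _ _ _ _ 0); try done; try lia; try (rewrite idx_e //= hj; done); try (rewrite e1 /= hj; done); try (rewrite idx_lo //; lia); try (rewrite idx_hi //; lia); try (rewrite /tp hj; tpc); try tpc.
by apply: (@bY _ _ _ _ 1); try done; try lia; try (rewrite idx_e //= hj; done); try (rewrite e1 /= hj; done); try (rewrite idx_lo //; lia); try (rewrite idx_hi //; lia); try (rewrite /tp hj; tpc); try tpc.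
Qed.


Lemma lam0 n l j a : 3 <= n -> 1 <= a <= (2*n).-1 -> lam l j (idx n j a) = 0.
Proof.
move=> hn ha; rewrite /lam; case: eqP => // E; exfalso; move: E.
rewrite /idx /epsj (_ : odd j.+1 = ~~ odd j) //.
case: ifP => h1; first by case: (odd j).
case: ifP => h2; case: (odd j) => /=; lia.
Qed.

Lemma ep_P n l i p : 3 <= n -> i < n -> 1 <= l -> p = pP n i ->
  eps n i (single n l p) = 0 /\ 0 < phi n i (single n l p).
Proof.
move=> hn hi hl ->; have G := goodposA hn hi.
case: G => [[? ? ? ? ?] ? [? ? ? ?] [? ? ? ?]].
rewrite epsA // phiA // !nth_single; negs; lia.
Qed.

Lemma ep_R n l i p : 3 <= n -> i < n -> 1 <= l -> p = pR n i ->
  eps n i (single n l p) = 0 /\ 0 < phi n i (single n l p).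
Proof.
move=> hn hi hl ->; have G := goodposA hn hi.
case: G => [[? ? ? ? ?] ? [? ? ? ?] [? ? ? ?]].
rewrite epsA // phiA // !nth_single; negs; lia.
Qed.

Lemma ep_N n l : 3 <= n -> 1 <= l ->
  eps n n (single n l n.-1) = 0 /\ 0 < phi n n (single n l n.-1).
Proof.
move=> hn hl; rewrite /eps /phi ltnn (_ : (n == 0) = false); last lia.
rewrite /cx /cxb /cx0 /posx /posxb /posx0 !nth_single; dec; lia.
Qed.



Lemma has_posx s k p : 1 <= s ->
  has (fun i => p == posx i) (iota s k) = (s.-1 <= p < s.-1 + k).
Proof.
move=> hs; apply/hasP/idP.
  by case=> x; rewrite mem_iota /posx => hx /eqP ->; lia.
move=> h; exists p.+1; first by rewrite mem_iota; lia.
by rewrite /posx.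
Qed.

Lemma has_posxb n s k p : 1 <= s -> s + k <= (2*n).+1 ->
  has (fun i => p == posxb n i) (iota s k) = (0 < k) && ((2*n).+2 - s - k <= p <= (2*n).+1 - s).
Proof.
move=> hs hk; apply/hasP/idP.
  by case=> x; rewrite mem_iota => hx /eqP ->; rewrite /posxb; lia.
move=> h; exists ((2*n).+1 - p); first by rewrite mem_iota; lia.
by rewrite /posxb; apply/eqP; lia.
Qed.

Lemma allowedA_Al n j a : 3 <= n -> 1 <= a <= n.-1 -> forall p, allowedA n j a p = Al n j a p.
Proof.
move=> hn ha p; rewrite /allowedA /Al !has_posx // /posxb.
case: (odd j) => /=; lia.
Qed.

Lemma allowedB_Al n j a : 3 <= n -> 1 <= a <= n.-1 ->
  forall p, allowedB n j a p = Al n j (n + a).-1 p.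
Proof.
move=> hn ha p; rewrite /allowedB /Al !has_posx // has_posxb //; last lia.
rewrite /posx0 /posxb; case: (odd j) => /=; lia.
Qed.

Unset Implicit Arguments. Set Strict Implicit.

Theorem mainTheorem4 (n l : nat) (hn : 3 <= n) (hl : 1 <= l) :
  let d := (2 * n).-1 in
  (* (II) *)
  (forall j, 1 <= j -> forall c, Bset n l j d c <-> inB n l c) /\
  (* (III) *)
  (forall j a b, 1 <= j -> 1 <= a <= d -> Bset n l j a.-1 b ->
     lam l j (idx n j a) <= eps n (idx n j a) b) /\
  (* (IV') *)
  (forall j a, 1 <= j -> 1 <= a <= d ->
     let i' := if a == d then idx n j.+1 1 else idx n j a.+1 in
     exists b, bpt n l j a = Some b /\ eps n i' b = 0 /\ 0 < phi n i' b) /\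
  (forall j, 1 <= j ->
     Some (ground n l j.+1) =
       ftil_iter n l (idx n j.+1 1) (lam l j.+1 (idx n j.+1 1)) (bpt n l j d)) /\
  (* explicit description of the sets B^{(j)}_a *)
  (forall j, 1 <= j ->
     (forall c, Bset n l j 0 c <-> c = ground n l j) /\
     (forall c, Bset n l j (2 * n).-1 c <-> inB n l c) /\
     (forall a, 1 <= a <= n.-1 -> forall c,
        Bset n l j a c <-> inB n l c /\ supp_in c (allowedA n j a)) /\
     (forall a, 1 <= a <= n.-1 -> forall c,
        Bset n l j (n + a).-1 c <-> inB n l c /\ supp_in c (allowedB n j a))) /\
  (* explicit description of the elements b^{(j)}_a *)
  (forall j, 1 <= j ->
     bpt n l j 0 = Some (ground n l j) /\
     bpt n l j (2 * n).-1 = Some (ground n l j.+1) /\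
     (forall a, 1 <= a <= n.-1 ->
        bpt n l j a = Some (single n l (posx a.+1)) /\
        bpt n l j (n + a).-1 = Some (single n l (posxb n (n - a).+1)))).
Proof.
cbv zeta.
have BC := fun j => @Bchar n l j hn.
have BE := fun j => @bpt_expl n l j hn hl.
have II : forall j, 1 <= j -> forall c, Bset n l j (2 * n).-1 c <-> inB n l c.
  move=> j hj c; rewrite BC //; split => [[]//|h]; split => // m _.
  by rewrite /Al eqxx.
have IVb : forall j, 1 <= j -> bpt n l j (2 * n).-1 = Some (ground n l j.+1).
  move=> j hj; rewrite BE // ground_single /tp; dec.
  by rewrite (_ : odd j.+1 = ~~ odd j) //; case: (odd j).
split; first exact: II.
split.
  by move=> j a b hj ha _; rewrite lam0.
split.
  move=> j a hj ha; rewrite BE; last lia.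
  eexists; split; first reflexivity.
  case: (a =P (2*n).-1) => [ea|na].
    cbv iota; rewrite ea idx_e // (_ : odd j.+2 = odd j); last by rewrite /= negbK.
    case hj': (odd j) => /=.
      by apply: ep_P; try done; try lia; try (rewrite /tp ?hj' ?pP0 ?pPS ?pR0 ?pRS; dec; lia).
    by apply: ep_P; try done; try lia; try (rewrite /tp ?hj' ?pP0 ?pPS ?pR0 ?pRS; dec; lia).
  cbv iota.
  case: (ltnP a n.-1) => h1.
    rewrite idx_lo //; last lia.
    by apply: ep_P; try done; try lia; try (rewrite /tp ?hj' ?pP0 ?pPS ?pR0 ?pRS; dec; lia).
  case: (ltnP n.-1 a) => h2; last first.
    rewrite idx_lo //; last lia.
    rewrite (_ : a.+1 = n); last lia.
    rewrite (_ : tp n j a = n.-1); last by rewrite /tp; dec; lia.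
    exact: ep_N.
  case: (ltnP a (2*n).-2) => h3.
    rewrite idx_hi; last lia.
    rewrite (_ : 2 * n - a.+1 = (2 * n - a.+2).+1); last lia.
    by apply: ep_R; try done; try lia; try (rewrite /tp ?hj' ?pP0 ?pPS ?pR0 ?pRS; dec; lia).
  rewrite idx_e; last lia.
  case hj': (odd j) => /=.
    by apply: ep_R; try done; try lia; try (rewrite /tp ?hj' ?pP0 ?pPS ?pR0 ?pRS; dec; lia).
  by apply: ep_R; try done; try lia; try (rewrite /tp ?hj' ?pP0 ?pPS ?pR0 ?pRS; dec; lia).
split.
  move=> j hj; rewrite lam0 //; last lia.
  by rewrite ftil_iter0 IVb.
split.
  move=> j hj; split; first by move=> c.
  split; first exact: II.
  split.
    move=> a ha c; rewrite BC; last lia.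
    by rewrite (supp_ext c (@allowedA_Al n j a hn ha)).
  move=> a ha c; rewrite BC; last lia.
  by rewrite (supp_ext c (@allowedB_Al n j a hn ha)).
move=> j hj; split; first by [].
split; first exact: IVb.
move=> a ha; rewrite !BE; try lia.
split; congr (Some (single _ _ _)); rewrite /tp /posx /posxb; dec; lia.
Qed.
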